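(* Consider an episodic RMDP with horizon $H$, rewards $R_h:\mathcal{S}\times\mathcal{A}\to[0,1]$, and $\mathcal{S}\times\mathcal{A}$-rectangular total-variation robust sets of radius $\rho\in[0,1)$. Then for any collection of transition kernels $P=\{P_h\}_{h=1}^H$, any Markov policy $\pi$, and any step $h\in[H]$, $$\max_{(s,a)}Q^\pi_{h,P,\boldsymbol{\Phi}}(s,a)-\min_{(s,a)}Q^\pi_{h,P,\boldsymbol{\Phi}}(s,a)\le\min\{H,\rho^{-1}\},\qquad \max_{s}V^\pi_{h,P,\boldsymbol{\Phi}}(s)-\min_{s}V^\pi_{h,P,\boldsymbol{\Phi}}(s)\le\min\{H,\rho^{-1}\}.$$
   Context: $\mathcal{S},\mathcal{A}$ finite. For a kernel $P_h$ the TV robust set is $\boldsymbol{\Phi}(P_h)=\bigotimes_{(s,a)}\mathcal{P}_\rho(s,a;P_h)$, $\mathcal{P}_\rho(s,a;P_h)=\{\widetilde P\in\Delta(\mathcal{S}):\frac12\sum_{s'}|\widetilde P(s')-P_h(s'|s,a)|\le\rho\}$. For a Markov policy $\pi=\{\pi_h\}$, $\pi_h:\mathcal{S}\to\Delta(\mathcal{A})$, the robust value functions are $V^\pi_{h,P,\boldsymbol{\Phi}}(s)=\inf\mathbb{E}_{\{\widetilde P_i\},\pi}[\sum_{i=h}^HR_i(s_i,a_i)\mid s_h=s]$ and $Q^\pi_{h,P,\boldsymbol{\Phi}}(s,a)=\inf\mathbb{E}_{\{\widetilde P_i\},\pi}[\sum_{i=h}^HR_i(s_i,a_i)\mid s_h=s,a_h=a]$,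 infima over all choices $\widetilde P_i(\cdot|s',a')\in\mathcal{P}_\rho(s',a';P_i)$. $\rho^{-1}=\infty$ when $\rho=0$. *)

(* Defs.v *)
From HB Require Import structures.
From mathcomp Require Import all_boot all_order all_algebra.
From mathcomp Require Import all_classical all_reals.
From mathcomp Require Import ereal.
Set Implicit Arguments. Unset Strict Implicit. Unset Printing Implicit Defensive.
Import Order.TTheory GRing.Theory Num.Theory.
Local Open Scope classical_set_scope.
Local Open Scope ring_scope.

Section RMDP.
Variables (R : realType) (S A : finType).

Definition is_dist (T : finType) (p : T -> R) : Prop :=
  (forall t, 0 <= p t) /\ \sum_(t : T) p t = 1.

Definition tv_ball (rho : R) (p q : S -> R) : Prop :=
  is_dist q /\ 2^-1 * \sum_(s' : S) `|q s' - p s'| <= rho.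

Definition robust_choice (H : nat) (rho : R) (P Pt : nat -> S -> A -> S -> R) : Prop :=
  forall i, (1 <= i <= H)%N -> forall s a, tv_ball rho (P i s a) (Pt i s a).

(* expectation of sum_{i=h}^{h+n-1} R_i(s_i,a_i) given s_h = s, under policy pi
   and kernels Pt, computed by backward recursion *)
Fixpoint vrec (Rw : nat -> S -> A -> R) (pi : nat -> S -> A -> R)
  (Pt : nat -> S -> A -> S -> R) (n h : nat) (s : S) : R :=
  match n with
  | O => 0
  | n'.+1 => \sum_(a : A) pi h s a *
       (Rw h s a + \sum_(s' : S) Pt h s a s' * vrec Rw pi Pt n' h.+1 s')
  end.

Definition Vval H Rw pi Pt (h : nat) (s : S) : R := vrec Rw pi Pt (H.+1 - h) h s.
Definition Qval H Rw pi Pt (h : nat) (s : S) (a : A) : R :=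
  Rw h s a + \sum_(s' : S) Pt h s a s' * vrec Rw pi Pt (H - h) h.+1 s'.

Definition robustV H rho P Rw pi (h : nat) (s : S) : R :=
  inf [set v | exists Pt, robust_choice H rho P Pt /\ v = Vval H Rw pi Pt h s].
Definition robustQ H rho P Rw pi (h : nat) (s : S) (a : A) : R :=
  inf [set v | exists Pt, robust_choice H rho P Pt /\ v = Qval H Rw pi Pt h s a].

End RMDP.

Definition minHrhoinv (R : realType) (H : nat) (rho : R) : \bar R :=
  mine (H%:R)%:E (if rho == 0 then +oo%E else (rho^-1)%:E).

(* Main.v *)
Require Import Defs.
From HB Require Import structures.
From mathcomp Require Import all_boot all_order all_algebra.
From mathcomp Require Import all_classical all_reals.
From mathcomp Require Import ereal.
From mathcomp Require Import zify ring lra.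
Import Order.TTheory GRing.Theory Num.Theory.
Local Open Scope classical_set_scope.
Local Open Scope ring_scope.

Section Gen.
Variable R : realType.

Lemma sum_dist_addc (T : finType) (q f : T -> R) c : is_dist q ->
  \sum_t q t * (f t + c) = \sum_t q t * f t + c.
Proof.
move=> [_ q1]; under eq_bigr do rewrite mulrDr.
by rewrite big_split /= -mulr_suml q1 mul1r.
Qed.

Lemma sum_dist_le (T : finType) (q f g : T -> R) : (forall t, 0 <= q t) ->
  (forall t, f t <= g t) -> \sum_t q t * f t <= \sum_t q t * g t.
Proof. by move=> q0 fg; apply: ler_sum => t _; apply: ler_wpM2l. Qed.

Lemma sum_dist_const_le (T : finType) (q f : T -> R) c : is_dist q ->
  (forall t, f t <= c) -> \sum_t q t * f t <= c.
Proof.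
move=> qd fc; apply: le_trans (_ : \sum_t q t * (0 + c) <= c).
  by apply: sum_dist_le => // t; [case: qd|rewrite add0r].
by rewrite (@sum_dist_addc _ q (fun=> 0)) // big1 ?add0r // => t _; rewrite mulr0.
Qed.

Lemma sum_dist_const_ge (T : finType) (q f : T -> R) c : is_dist q ->
  (forall t, c <= f t) -> c <= \sum_t q t * f t.
Proof.
move=> qd fc; apply: le_trans (_ : c <= \sum_t q t * (0 + c)) _.
  by rewrite (@sum_dist_addc _ q (fun=> 0)) // big1 ?add0r // => t _; rewrite mulr0.
by apply: sum_dist_le => // t; [case: qd|rewrite add0r].
Qed.

Lemma exists_min (T : finType) (w : T -> R) (s : T) :
  exists s0, forall t, w s0 <= w t.
Proof.
case: (@arg_minP _ _ _ s predT w isT) => s0 _ H.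
by exists s0 => t; apply: H.
Qed.

Lemma range_span (T : finType) (f : T -> R) c :
  0 <= c -> (forall x y, f x <= f y + c) -> sup (range f) - inf (range f) <= c.
Proof.
move=> c0 fc; case: (pickP (@predT T)) => [x0 _|T0].
  have ne : range f !=set0 by exists (f x0); exists x0.
  rewrite lerBlDl; apply: ge_sup => //; move=> _ [x _ <-].
  rewrite -lerBlDr; apply: lb_le_inf => //; move=> _ [y _ <-].
  by rewrite lerBlDr.
have -> : range f = set0.
  by apply/seteqP; split => // y [x _ _]; have := T0 x.
by rewrite sup0 inf0 subr0.
Qed.

End Gen.

Section Main.
Variables (R : realType) (S A : finType) (H : nat) (rho : R)
  (Rw : nat -> S -> A -> R) (P : nat -> S -> A -> S -> R)
  (pi : nat -> S -> A -> R).
Hypotheses (rho0 : 0 <= rho) (rho1 : rho < 1)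
  (HRw : forall i s a, (1 <= i <= H)%N -> 0 <= Rw i s a <= 1)
  (HP : forall i s a, (1 <= i <= H)%N -> is_dist (P i s a))
  (Hpi : forall i s, (1 <= i <= H)%N -> is_dist (pi i s)).

Definition bset (p w : S -> R) : set R :=
  [set x | exists q, tv_ball rho p q /\ x = \sum_s q s * w s].
Definition binf (p w : S -> R) : R := inf (bset p w).

Fixpoint wrec (n i : nat) (s : S) : R :=
  match n with
  | O => 0
  | n'.+1 => \sum_(a : A) pi i s a * (Rw i s a + binf (P i s a) (wrec n' i.+1))
  end.

Fixpoint B (n : nat) : R := match n with O => 0 | n'.+1 => 1 + (1 - rho) * B n' end.

Lemma B_bounds n : [/\ 0 <= B n, B n <= n%:R & rho * B n <= 1].
Proof.
elim: n => [|n [b0 bn rb]] /=; first by rewrite mulr0 lexx.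
have r1 : 0 <= 1 - rho by rewrite subr_ge0 ltW.
split.
- by rewrite addr_ge0 // mulr_ge0.
- rewrite -addn1 natrD addrC lerD2r; apply: le_trans (_ : 1 * B n <= _).
    by rewrite ler_wpM2r // lerBlDr lerDl.
  by rewrite mul1r.
- rewrite mulrDr mulr1 mulrCA.
  apply: le_trans (_ : rho + (1 - rho) * 1 <= _); last by rewrite mulr1 addrC subrK.
  by rewrite lerD2l ler_wpM2l.
Qed.

Lemma bset_ne p w : is_dist p -> bset p w !=set0.
Proof.
move=> pd; exists (\sum_s p s * w s), p; split => //; split => //.
rewrite big1 ?mulr0 // => s _; by rewrite subrr normr0.
Qed.

Lemma bset_lb p w m : (forall s, m <= w s) -> lbound (bset p w) m.
Proof.
by move=> wm _ [q [[qd _] ->]]; apply: sum_dist_const_ge.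
Qed.

Lemma binf_ge p w m : is_dist p -> (forall s, m <= w s) -> m <= binf p w.
Proof. by move=> pd wm; apply: lb_le_inf; [apply: bset_ne|apply: bset_lb]. Qed.

Lemma binf_le p w q : tv_ball rho p q -> binf p w <= \sum_s q s * w s.
Proof.
move=> qb; apply: ge_inf; last by exists q.
exists (- \sum_s `|w s|); apply: bset_lb => s.
rewrite lerNl; apply: le_trans (ler_norm _) _; rewrite normrN.
by rewrite (bigD1 s) //= lerDl sumr_ge0.
Qed.

Lemma binf_approx p w e : is_dist p -> 0 < e ->
  exists q, tv_ball rho p q /\ \sum_s q s * w s <= binf p w + e.
Proof.
move=> pd e0; have lt : binf p w < binf p w + e by rewrite ltrDl.
have [y [q [qb ->]] ylt] := inf_lt (bset_ne p w pd) lt.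
by exists q; split => //; apply: ltW.
Qed.

Lemma mix_ball (p : S -> R) (s0 : S) : is_dist p ->
  tv_ball rho p (fun s => (1 - rho) * p s + rho * (s == s0)%:R).
Proof.
move=> [p0 p1]; have r1 : 0 <= 1 - rho by rewrite subr_ge0 ltW.
have ind : \sum_s ((s == s0)%:R : R) = 1.
  by rewrite (bigD1 s0) //= eqxx big1 ?addr0 // => s /negbTE ->.
split; first split.
- by move=> s; rewrite addr_ge0 // mulr_ge0.
- by rewrite big_split /= -!mulr_sumr p1 ind !mulr1 subrK.
- apply: le_trans (_ : 2^-1 * (rho * 2) <= _); last first.
    by rewrite mulrCA mulVf ?mulr1 // pnatr_eq0.
  rewrite ler_wpM2l // ?invr_ge0 ?ler0n //.
  apply: le_trans (_ : \sum_s rho * ((s == s0)%:R + p s) <= _).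
    apply: ler_sum => s _.
    have -> : (1 - rho) * p s + rho * (s == s0)%:R - p s = rho * ((s == s0)%:R - p s) by ring.
    rewrite normrM ger0_norm // ler_wpM2l //; apply: le_trans (ler_normB _ _) _.
    by rewrite ger0_norm ?ler0n // ger0_norm.
  by rewrite -mulr_sumr big_split /= ind p1.
Qed.

Lemma binf_bounds (p w : S -> R) Bn (s0 : S) : is_dist p -> (forall s t, w s <= w t + Bn) ->
  (forall t, w s0 <= w t) -> w s0 <= binf p w /\ binf p w <= w s0 + (1 - rho) * Bn.
Proof.
move=> pd Hw Hs0; split; first by apply: binf_ge.
have r1 : 0 <= 1 - rho by rewrite subr_ge0 ltW.
apply: le_trans (binf_le p w _ (mix_ball p s0 pd)) _.
have -> : \sum_s ((1 - rho) * p s + rho * (s == s0)%:R) * w s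
    = (1 - rho) * \sum_s p s * w s + rho * w s0.
  rewrite (eq_bigr (fun s => (1-rho) * (p s * w s) + rho * ((s == s0)%:R * w s))); last first.
    by move=> s _; ring.
  have ind : \sum_s (s == s0)%:R * w s = w s0.
    rewrite (bigD1 s0) //= eqxx mul1r big1 ?addr0 //.
    by move=> s /negbTE ->; rewrite mul0r.
  by rewrite big_split /= -!mulr_sumr ind.
have h : \sum_s p s * w s <= w s0 + Bn by apply: sum_dist_const_le => // t; apply: Hw.
apply: le_trans (_ : (1 - rho) * (w s0 + Bn) + rho * w s0 <= _).
  by rewrite lerD2r ler_wpM2l.
by rewrite le_eqVlt; apply/orP; left; apply/eqP; ring.
Qed.

Lemma wrec_span n i : (1 <= i)%N -> (i + n = H.+1)%N ->
  forall s t, wrec n i s <= wrec n i t + B n.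
Proof.
elim: n i => [|n IH] i i1 iH s t /=; first by rewrite addr0.
have iH' : (1 <= i <= H)%N by lia.
have IH' : forall s t, wrec n i.+1 s <= wrec n i.+1 t + B n by apply: IH; lia.
have [s0 Hs0] := @exists_min _ _ (wrec n i.+1) s.
have bnd : forall u a, wrec n i.+1 s0 <= Rw i u a + binf (P i u a) (wrec n i.+1)
    <= 1 + wrec n i.+1 s0 + (1 - rho) * B n.
  move=> u a; have [lo hi] := @binf_bounds _ _ _ s0 (HP i u a iH') IH' Hs0.
  have /andP[r0 r1'] := HRw i u a iH'.
  apply/andP; split; first by rewrite -[wrec _ _ s0]add0r lerD.
  by rewrite -addrA lerD.
apply: le_trans (_ : 1 + wrec n i.+1 s0 + (1 - rho) * B n <= _).
  apply: sum_dist_const_le; first exact: Hpi i _ iH'.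
  by move=> a; case/andP: (bnd s a).
have h : wrec n i.+1 s0 <= \sum_a pi i t a * (Rw i t a + binf (P i t a) (wrec n i.+1)).
  apply: sum_dist_const_ge; first exact: Hpi i _ iH'.
  by move=> a; case/andP: (bnd t a).
by rewrite (addrC 1) -addrA lerD2r.
Qed.


Lemma adm_P : robust_choice H rho P P.
Proof.
move=> i iH s a; split; first exact: HP.
by rewrite big1 ?mulr0 // => t _; rewrite subrr normr0.
Qed.

Lemma Vlow Pt : robust_choice H rho P Pt -> forall n i, (1 <= i)%N ->
  (i + n = H.+1)%N -> forall s, wrec n i s <= vrec Rw pi Pt n i s.
Proof.
move=> hPt; elim=> [|n IH] i i1 iH s /=; first by [].
have iH' : (1 <= i <= H)%N by lia.
apply: ler_sum => a _; apply: ler_wpM2l; first by case: (Hpi i s iH').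
rewrite lerD2l; apply: le_trans (binf_le _ _ _ (hPt i iH' s a)) _.
apply: sum_dist_le; first by case: (hPt i iH' s a) => [[q0 _] _].
by move=> s'; apply: IH; lia.
Qed.

Lemma approx e : 0 < e -> exists Pt, robust_choice H rho P Pt /\
  forall j s a, (1 <= j <= H)%N ->
    \sum_s' Pt j s a s' * wrec (H - j) j.+1 s' <= binf (P j s a) (wrec (H - j) j.+1) + e.
Proof.
move=> e0.
have : forall x : nat * S * A, exists q : S -> R, (1 <= x.1.1 <= H)%N ->
   tv_ball rho (P x.1.1 x.1.2 x.2) q /\
   \sum_s' q s' * wrec (H - x.1.1) x.1.1.+1 s'
     <= binf (P x.1.1 x.1.2 x.2) (wrec (H - x.1.1) x.1.1.+1) + e.
  move=> [[j s] a] /=; case: (boolP (1 <= j <= H)%N) => jH.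
    by have [q qh] := binf_approx _ (wrec (H-j) j.+1) _ (HP j s a jH) e0; exists q.
  by exists (P j s a).
move=> /choice [f hf].
exists (fun j s a => f (j, s, a)); split.
  by move=> j jH s a; case: (hf (j,s,a) jH).
by move=> j s a jH; case: (hf (j,s,a) jH).
Qed.

Lemma Vup Pt e : robust_choice H rho P Pt ->
  (forall j s a, (1 <= j <= H)%N ->
    \sum_s' Pt j s a s' * wrec (H - j) j.+1 s' <= binf (P j s a) (wrec (H - j) j.+1) + e) ->
  forall n i, (1 <= i)%N -> (i + n = H.+1)%N ->
  forall s, vrec Rw pi Pt n i s <= wrec n i s + n%:R * e.
Proof.
move=> hPt happ; elim=> [|n IH] i i1 iH s /=; first by rewrite mul0r addr0.
have iH' : (1 <= i <= H)%N by lia.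
have Hn : (H - i = n)%N by lia.
have pd := Hpi i s iH'.
rewrite -sum_dist_addc //; apply: sum_dist_le; first by case: pd.
move=> a; rewrite -addrA lerD2l.
have qd : is_dist (Pt i s a) by case: (hPt i iH' s a).
apply: le_trans (_ : \sum_s' Pt i s a s' * (wrec n i.+1 s' + n%:R * e) <= _).
  by apply: sum_dist_le; [case: qd | move=> s'; apply: IH; lia].
rewrite sum_dist_addc //.
have := happ i s a iH'; rewrite Hn => h.
apply: le_trans (_ : binf (P i s a) (wrec n i.+1) + e + n%:R * e <= _).
  by rewrite lerD2r.
by rewrite -addrA lerD2l -natr1 mulrDl mul1r addrC.
Qed.

Lemma scale_le (e : R) k : 0 < e -> (k <= H.+1)%N -> k%:R * (e / H.+1%:R) <= e.
Proof.
move=> e0 kH.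
have e'0 : 0 <= e / H.+1%:R by rewrite divr_ge0 // ltW.
apply: le_trans (_ : H.+1%:R * (e / H.+1%:R) <= e).
  by rewrite ler_wpM2r // ler_nat.
by rewrite mulrCA mulfV ?mulr1 // pnatr_eq0.
Qed.

Lemma rV_eq h s : (1 <= h <= H)%N ->
  robustV H rho P Rw pi h s = wrec (H.+1 - h) h s.
Proof.
move=> hH; rewrite /robustV.
set E := [set v | _].
have lb : lbound E (wrec (H.+1-h) h s).
  by move=> _ [Pt [hPt ->]]; apply: Vlow => //; lia.
have ne : E !=set0 by exists (Vval H Rw pi P h s), P; split => //; exact: adm_P.
apply/le_anti/andP; split; last by apply: lb_le_inf.
apply/ler_addgt0Pr => e e0.
have e'0 : 0 < e / H.+1%:R by rewrite divr_gt0 // ltr0n.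
have [Pt [hPt happ]] := approx _ e'0.
apply: le_trans (_ : Vval H Rw pi Pt h s <= _).
  by apply: ge_inf; [exists (wrec (H.+1-h) h s) | exists Pt].
apply: le_trans (@Vup Pt _ hPt happ (H.+1 - h) h _ _ s) _; try lia.
by rewrite lerD2l scale_le //; lia.
Qed.

Lemma rQ_eq h s a : (1 <= h <= H)%N ->
  robustQ H rho P Rw pi h s a = Rw h s a + binf (P h s a) (wrec (H - h) h.+1).
Proof.
move=> hH; rewrite /robustQ.
set E := [set v | _].
have lb : lbound E (Rw h s a + binf (P h s a) (wrec (H - h) h.+1)).
  move=> _ [Pt [hPt ->]]; rewrite /Qval lerD2l.
  apply: le_trans (binf_le _ _ _ (hPt h hH s a)) _.
  apply: sum_dist_le; first by case: (hPt h hH s a) => [[q0 _] _].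
  by move=> s'; apply: Vlow => //; lia.
have ne : E !=set0 by exists (Qval H Rw pi P h s a), P; split => //; exact: adm_P.
apply/le_anti/andP; split; last by apply: lb_le_inf.
apply/ler_addgt0Pr => e e0.
set e' := e / H.+1%:R.
have e'0 : 0 < e' by rewrite divr_gt0 // ltr0n.
have [Pt [hPt happ]] := approx _ e'0.
apply: le_trans (_ : Qval H Rw pi Pt h s a <= _).
  by apply: ge_inf; [exists (Rw h s a + binf (P h s a) (wrec (H - h) h.+1)) | exists Pt].
rewrite /Qval -!addrA lerD2l.
have qd : is_dist (Pt h s a) by case: (hPt h hH s a).
apply: le_trans (_ : \sum_s' Pt h s a s' * (wrec (H - h) h.+1 s' + (H - h)%:R * e') <= _).
  by apply: sum_dist_le; [case: qd | move=> s'; apply: Vup => //; lia].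
rewrite sum_dist_addc //.
apply: le_trans (_ : binf (P h s a) (wrec (H - h) h.+1) + e' + (H - h)%:R * e' <= _).
  by rewrite lerD2r; apply: happ.
rewrite -addrA lerD2l.
have -> : e' + (H - h)%:R * e' = (H - h).+1%:R * e' by rewrite -natr1 mulrDl mul1r addrC.
by apply: scale_le => //; lia.
Qed.

Lemma final_bound k : (k <= H)%N -> ((B k)%:E <= minHrhoinv H rho)%E.
Proof.
move=> kH; have [b0 bk rb] := B_bounds k.
rewrite /minHrhoinv le_min; apply/andP; split.
  by rewrite lee_fin; apply: le_trans bk _; rewrite ler_nat.
case: eqP => [_|/eqP r0]; first exact: leey.
rewrite lee_fin -[B k](mulKf r0).
apply: le_trans (_ : rho^-1 * 1 <= _); last by rewrite mulr1.
by apply: ler_wpM2l => //; rewrite invr_ge0.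
Qed.

Lemma main_both h : (1 <= h <= H)%N ->
  ((sup (range (fun sa : S * A => robustQ H rho P Rw pi h sa.1 sa.2))
    - inf (range (fun sa : S * A => robustQ H rho P Rw pi h sa.1 sa.2)))%:E
     <= minHrhoinv H rho)%E /\
  ((sup (range (fun s : S => robustV H rho P Rw pi h s))
    - inf (range (fun s : S => robustV H rho P Rw pi h s)))%:E
     <= minHrhoinv H rho)%E.
Proof.
move=> hH; have hk : (H.+1 - h <= H)%N by lia.
have b0 : 0 <= B (H.+1 - h) by case: (B_bounds (H.+1 - h)).
have fb := final_bound _ hk.
split; (apply: le_trans _ fb; rewrite lee_fin).
  have -> : (fun sa : S * A => robustQ H rho P Rw pi h sa.1 sa.2) =
      (fun sa => Rw h sa.1 sa.2 + binf (P h sa.1 sa.2) (wrec (H - h) h.+1)).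
    by apply/funext => sa; apply: rQ_eq.
  apply: range_span => // -[s1 a1] [s2 a2] /=.
  have IH' : forall s t, wrec (H - h) h.+1 s <= wrec (H - h) h.+1 t + B (H - h).
    by apply: wrec_span; lia.
  have [s0 Hs0] := @exists_min _ _ (wrec (H - h) h.+1) s1.
  have [_ hi] := @binf_bounds _ _ _ s0 (HP h s1 a1 hH) IH' Hs0.
  have [lo _] := @binf_bounds _ _ _ s0 (HP h s2 a2 hH) IH' Hs0.
  have /andP[_ r1'] := HRw h s1 a1 hH.
  have /andP[r0' _] := HRw h s2 a2 hH.
  have -> : (H.+1 - h = (H - h).+1)%N by lia.
  rewrite /=.
  apply: le_trans (_ : 1 + (wrec (H - h) h.+1 s0 + (1 - rho) * B (H - h)) <= _).
    by apply: lerD.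
  have : wrec (H - h) h.+1 s0 <= Rw h s2 a2 + binf (P h s2 a2) (wrec (H - h) h.+1).
    by rewrite -[wrec _ _ s0]add0r lerD.
  set c := (1 - rho) * B (H - h); set m := wrec _ _ s0; set X := Rw h s2 a2 + _.
  by move=> mX; rewrite addrCA lerD2r.
have -> : (fun s => robustV H rho P Rw pi h s) = wrec (H.+1 - h) h.
  by apply/funext => s; apply: rV_eq.
have h1 : (1 <= h)%N by lia.
have h2 : (h + (H.+1 - h) = H.+1)%N by lia.
by apply: range_span => // x y; apply: (wrec_span _ _ h1 h2).
Qed.

End Main.

Theorem proposition4 (R : realType) (S A : finType) (H : nat) (rho : R)
  (Rw : nat -> S -> A -> R) (P : nat -> S -> A -> S -> R)
  (pi : nat -> S -> A -> R) (h : nat) :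
  0 <= rho -> rho < 1 ->
  (forall i s a, (1 <= i <= H)%N -> 0 <= Rw i s a <= 1) ->
  (forall i s a, (1 <= i <= H)%N -> is_dist (P i s a)) ->
  (forall i s, (1 <= i <= H)%N -> is_dist (pi i s)) ->
  (1 <= h <= H)%N ->
  ((sup (range (fun sa : S * A => robustQ H rho P Rw pi h sa.1 sa.2))
    - inf (range (fun sa : S * A => robustQ H rho P Rw pi h sa.1 sa.2)))%:E
     <= minHrhoinv H rho)%E /\
  ((sup (range (fun s : S => robustV H rho P Rw pi h s))
    - inf (range (fun s : S => robustV H rho P Rw pi h s)))%:E
     <= minHrhoinv H rho)%E.
Proof.
move=> r0 r1 HRw HP Hpi hH.
exact: (@main_both R S A H rho Rw P pi r0 r1 HRw HP Hpi h hH).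
Qed.
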